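(* Let $\mathbf{A},\mathbf{B}\in\mathbb{R}^{n\times m}$ be two matrices of the same shape. Then $\|\mathbf{A}\circ\mathbf{B}\|_{\mathrm{tr}}\le\mu(\mathbf{A})^2\,\|\mathbf{A}\|_{\mathrm{tr}}\,\|\mathbf{B}\|_{\mathrm{tr}}$.
   Context: $\circ$ denotes the Hadamard (entrywise) product and $\|\cdot\|_{\mathrm{tr}}$ the trace (nuclear) norm. Coherence: for a matrix $\mathbf{M}\in\mathbb{R}^{n\times m}$ of rank $r$ with (compact) SVD $\mathbf{M}=\mathbf{U}\boldsymbol\Sigma\mathbf{V}^\top$ ($\mathbf{U}\in\mathbb{R}^{n\times r}$, $\mathbf{V}\in\mathbb{R}^{m\times r}$), $\mu(\mathbf{M})=\max\{\max_{1\le i\le n}\|\mathbf{U}_{i,*}\|,\max_{1\le j\le m}\|\mathbf{V}_{j,*}\|\}$, where $\mathbf{U}_{i,*}$, $\mathbf{V}_{j,*}$ are rows and $\|\cdot\|$ is the Euclidean norm (not normalized by the matrix size). *)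

(* Defs.v *)
(* Real matrices over an arbitrary real closed field R
   (covers the real numbers). *)
From mathcomp Require Import all_boot all_order all_algebra.
Set Implicit Arguments. Unset Strict Implicit. Unset Printing Implicit Defensive.
Import Order.TTheory GRing.Theory Num.Theory.
Local Open Scope ring_scope.

Definition hadamard (R : ringType) (n m : nat) (A B : 'M[R]_(n, m)) : 'M[R]_(n, m) :=
  \matrix_(i, j) (A i j * B i j).

(* Compact SVD:  M = U diag(s) V^T, with U (n x r), V (m x r) having
   orthonormal columns and all singular values s_i > 0 (so r = rank M). *)
Definition is_csvd (R : rcfType) (n m r : nat) (M : 'M[R]_(n, m))
  (U : 'M[R]_(n, r)) (s : 'rV[R]_r) (V : 'M[R]_(m, r)) : Prop :=
  [/\ U^T *m U = 1%:M, V^T *m V = 1%:M, (forall i, 0 < s 0 i)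
    & M = U *m diag_mx s *m V^T].

(* Trace (nuclear) norm computed from a compact SVD: sum of singular values. *)
Definition trnorm_of (R : rcfType) (r : nat) (s : 'rV[R]_r) : R := \sum_(i < r) s 0 i.

Definition rnorm (R : rcfType) (k : nat) (v : 'rV[R]_k) : R :=
  Num.sqrt (\sum_(j < k) v 0 j ^+ 2).

(* Coherence computed from the SVD factors U, V (non-normalized). *)
Definition coh (R : rcfType) (n m r : nat) (U : 'M[R]_(n, r)) (V : 'M[R]_(m, r)) : R :=
  Num.max (\big[Num.max/0]_(i < n) rnorm (row i U))
          (\big[Num.max/0]_(j < m) rnorm (row j V)).

(* Main.v *)
Require Import Defs.
From mathcomp Require Import all_boot all_order all_algebra.
From mathcomp Require Import ring lra.
Import Order.TTheory GRing.Theory Num.Theory.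
Local Open Scope ring_scope.

Section Helpers.
Set Implicit Arguments.


Lemma orth_entry {R : rcfType} n r (U : 'M[R]_(n, r)) : U^T *m U = 1%:M ->
  forall p q, \sum_i U i p * U i q = (p == q)%:R.
Proof.
move=> H p q; have := congr1 (fun M : 'M[R]_r => M p q) H; rewrite !mxE => <-.
by apply: eq_bigr => i _; rewrite mxE.
Qed.

Lemma bessel {R : rcfType} n r (x : 'I_n -> R) (U : 'M[R]_(n, r)) : U^T *m U = 1%:M ->
  \sum_p (\sum_i U i p * x i) ^+ 2 <= \sum_i x i ^+ 2.
Proof.
move=> /orth_entry H.
set a := fun p => \sum_i U i p * x i.
set z := fun i => \sum_p U i p * a p.
have h1 : \sum_i x i * z i = \sum_p a p ^+ 2.
  rewrite /z; under eq_bigr => i _ do rewrite mulr_sumr.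
  rewrite exchange_big /=; apply: eq_bigr => p _.
  rewrite expr2 /a mulr_suml; apply: eq_bigr => i _; ring.
have h2 : \sum_i z i ^+ 2 = \sum_p a p ^+ 2.
  have e : forall p, \sum_i U i p * z i = a p.
    move=> p; rewrite /z; under eq_bigr => i _ do rewrite mulr_sumr.
    rewrite exchange_big /=.
    rewrite (bigD1 p) //= [X in _ + X]big1 ?addr0.
      transitivity (a p * (p == p)%:R); last by rewrite eqxx mulr1.
      rewrite -H mulr_sumr; apply: eq_bigr => i _; ring.
    move=> q qp; transitivity (a q * (p == q)%:R); last by rewrite eq_sym (negbTE qp) mulr0.
    rewrite -H mulr_sumr; apply: eq_bigr => i _; ring.
  transitivity (\sum_p a p * \sum_i U i p * z i); last first.
    by apply: eq_bigr => p _; rewrite e expr2.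
  have ez : forall i, z i ^+ 2 = \sum_p z i * (U i p * a p).
    by move=> i; rewrite expr2 {2}/z mulr_sumr.
  under eq_bigr => i _ do rewrite ez.
  rewrite exchange_big /=; apply: eq_bigr => p _.
  rewrite mulr_sumr; apply: eq_bigr => i _; ring.
have h0 : 0 <= \sum_i (x i - z i) ^+ 2 by apply: sumr_ge0 => i _; exact: sqr_ge0.
have : \sum_i (x i - z i) ^+ 2 = \sum_i x i ^+ 2 - \sum_p a p ^+ 2.
  have -> : \sum_i (x i - z i) ^+ 2 = \sum_i x i ^+ 2 - 2 * \sum_i x i * z i + \sum_i z i ^+ 2.
    rewrite mulr_sumr -sumrB -big_split /=; apply: eq_bigr => i _; ring.
  rewrite h1 h2; ring.
move=> e; rewrite e subr_ge0 in h0; exact: h0.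
Qed.


Lemma svd_entry {R : rcfType} n m r (U : 'M[R]_(n, r)) (s : 'rV[R]_r) (V : 'M[R]_(m, r)) i j :
  (U *m diag_mx s *m V^T) i j = \sum_k U i k * s 0 k * V j k.
Proof. by rewrite mul_mx_diag !mxE; apply: eq_bigr => k _; rewrite !mxE. Qed.

Lemma trnorm_eq {R : rcfType} n m r (C : 'M[R]_(n, m)) (U : 'M[R]_(n, r)) (s : 'rV[R]_r)
  (V : 'M[R]_(m, r)) : is_csvd C U s V ->
  trnorm_of s = \sum_p \sum_i \sum_j U i p * C i j * V j p.
Proof.
case=> hU hV _ hC.
have D : U^T *m C *m V = diag_mx s.
  by rewrite hC !mulmxA hU mul1mx -mulmxA hV mulmx1.
rewrite /trnorm_of; apply: eq_bigr => p _.
have := congr1 (fun M : 'M[R]_r => M p p) D; rewrite [in RHS]mxE eqxx mulr1n => <-.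
rewrite mxE; under eq_bigr => j _ do rewrite mxE mulr_suml.
rewrite exchange_big /=; apply: eq_bigr => i _; apply: eq_bigr => j _.
by rewrite !mxE.
Qed.

Lemma abs_le_rnorm {R : rcfType} k (v : 'rV[R]_k) j : `|v 0 j| <= rnorm v.
Proof.
rewrite /rnorm -sqrtr_sqr; apply: ler_wsqrtr.
rewrite (bigD1 j) //= lerDl; apply: sumr_ge0 => i _; exact: sqr_ge0.
Qed.

Lemma sq_le {R : rcfType} (u mu : R) : `|u| <= mu -> u ^+ 2 <= mu ^+ 2.
Proof. move=> h; have h0 := normr_ge0 u; have := real_normK (num_real u); nra. Qed.

Lemma cohU {R : rcfType} n m r (U : 'M[R]_(n, r)) (V : 'M[R]_(m, r)) i k :
  U i k ^+ 2 <= coh U V ^+ 2.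
Proof.
apply: sq_le; have h := @abs_le_rnorm _ _ (row i U) k; rewrite mxE in h; apply: le_trans h _.
rewrite /coh le_max; apply/orP; left.
exact: (le_bigmax 0 (fun i0 => rnorm (row i0 U)) i).
Qed.

Lemma cohV {R : rcfType} n m r (U : 'M[R]_(n, r)) (V : 'M[R]_(m, r)) i k :
  V i k ^+ 2 <= coh U V ^+ 2.
Proof.
apply: sq_le; have h := @abs_le_rnorm _ _ (row i V) k; rewrite mxE in h; apply: le_trans h _.
rewrite /coh le_max; apply/orP; right.
exact: (le_bigmax 0 (fun i0 => rnorm (row i0 V)) i).
Qed.

Lemma Tbound {R : rcfType} n m r1 (UC : 'M[R]_(n, r1)) (VC : 'M[R]_(m, r1))
  (x : 'I_n -> R) (y : 'I_m -> R) (mu : R) :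
  UC^T *m UC = 1%:M -> VC^T *m VC = 1%:M ->
  \sum_i x i ^+ 2 <= mu -> \sum_j y j ^+ 2 <= mu ->
  \sum_p (\sum_i UC i p * x i) * (\sum_j VC j p * y j) <= mu.
Proof.
move=> hU hV hx hy.
have bx := @bessel _ _ _ x _ hU; have bY := @bessel _ _ _ y _ hV.
apply: le_trans (_ : \sum_p ((\sum_i UC i p * x i) ^+ 2 + (\sum_j VC j p * y j) ^+ 2) / 2 <= _).
  apply: ler_sum => p _; have := sqr_ge0 ((\sum_i UC i p * x i) - (\sum_j VC j p * y j)); nra.
rewrite -mulr_suml big_split /=; lra.
Qed.

Lemma Xbound {R : rcfType} n m r rb (UA : 'M[R]_(n, r)) (VA : 'M[R]_(m, r)) (UB : 'M[R]_(n, rb)) k l :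
  UB^T *m UB = 1%:M ->
  \sum_i (UA i k * UB i l) ^+ 2 <= coh UA VA ^+ 2.
Proof.
move=> /orth_entry H.
apply: le_trans (_ : \sum_i coh UA VA ^+ 2 * UB i l ^+ 2 <= _).
  apply: ler_sum => i _; rewrite exprMn; apply: ler_wpM2r; [exact: sqr_ge0|exact: cohU].
rewrite -mulr_sumr; under eq_bigr => i _ do rewrite expr2.
by rewrite H eqxx mulr1.
Qed.

Lemma Ybound {R : rcfType} n m r rb (UA : 'M[R]_(n, r)) (VA : 'M[R]_(m, r)) (VB : 'M[R]_(m, rb)) k l :
  VB^T *m VB = 1%:M ->
  \sum_j (VA j k * VB j l) ^+ 2 <= coh UA VA ^+ 2.
Proof.
move=> /orth_entry H.
apply: le_trans (_ : \sum_j coh UA VA ^+ 2 * VB j l ^+ 2 <= _).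
  apply: ler_sum => i _; rewrite exprMn; apply: ler_wpM2r; [exact: sqr_ge0|exact: cohV].
rewrite -mulr_sumr; under eq_bigr => i _ do rewrite expr2.
by rewrite H eqxx mulr1.
Qed.

End Helpers.

Theorem lemma3 (R : rcfType) (n m : nat) (A B : 'M[R]_(n, m))
  (rA : nat) (UA : 'M[R]_(n, rA)) (sA : 'rV[R]_rA) (VA : 'M[R]_(m, rA))
  (rB : nat) (UB : 'M[R]_(n, rB)) (sB : 'rV[R]_rB) (VB : 'M[R]_(m, rB))
  (rC : nat) (UC : 'M[R]_(n, rC)) (sC : 'rV[R]_rC) (VC : 'M[R]_(m, rC)) :
  is_csvd A UA sA VA -> is_csvd B UB sB VB -> is_csvd (hadamard A B) UC sC VC ->
  trnorm_of sC <= coh UA VA ^+ 2 * trnorm_of sA * trnorm_of sB.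
Proof.
move=> hA hB hC.
rewrite (trnorm_eq hC).
have eC : forall i j, hadamard A B i j = \sum_k \sum_l (sA 0 k * sB 0 l) *
    ((UA i k * UB i l) * (VA j k * VB j l)).
  move=> i j; case: hA => _ _ _ ->; case: hB => _ _ _ ->.
  rewrite mxE !svd_entry mulr_suml; apply: eq_bigr => k _.
  rewrite mulr_sumr; apply: eq_bigr => l _; ring.
have -> : \sum_p \sum_i \sum_j UC i p * hadamard A B i j * VC j p =
   \sum_k \sum_l (sA 0 k * sB 0 l) * \sum_p (\sum_i UC i p * (UA i k * UB i l)) *
        (\sum_j VC j p * (VA j k * VB j l)).
  transitivity (\sum_p \sum_i \sum_j \sum_k \sum_l
     UC i p * ((sA 0 k * sB 0 l) * ((UA i k * UB i l) * (VA j k * VB j l))) * VC j p).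
    apply: eq_bigr => p _; apply: eq_bigr => i _; apply: eq_bigr => j _.
    rewrite eC mulr_sumr mulr_suml; apply: eq_bigr => k _.
    by rewrite mulr_sumr mulr_suml.
  transitivity (\sum_k \sum_l \sum_p \sum_i \sum_j
     UC i p * ((sA 0 k * sB 0 l) * ((UA i k * UB i l) * (VA j k * VB j l))) * VC j p).
    under eq_bigr => p _ do under eq_bigr => i _ do rewrite exchange_big.
    under eq_bigr => p _ do rewrite exchange_big.
    rewrite exchange_big.
    under eq_bigr => k _ do under eq_bigr => p _ do under eq_bigr => i _ do rewrite exchange_big.
    under eq_bigr => k _ do under eq_bigr => p _ do rewrite exchange_big.
    under eq_bigr => k _ do rewrite exchange_big.
    by [].
  apply: eq_bigr => k _; apply: eq_bigr => l _.
  rewrite mulr_sumr; apply: eq_bigr => p _.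
  rewrite mulr_suml mulr_sumr; apply: eq_bigr => i _.
  rewrite mulr_sumr mulr_sumr; apply: eq_bigr => j _; ring.
case: hA => _ _ psA _; case: hB => hUB hVB psB _; case: hC => hUC hVC _ _.
apply: le_trans (_ : \sum_k \sum_l (sA 0 k * sB 0 l) * coh UA VA ^+ 2 <= _).
  apply: ler_sum => k _; apply: ler_sum => l _.
  apply: ler_wpM2l; first by apply: mulr_ge0; apply: ltW.
  apply: Tbound => //; [exact: Xbound | exact: Ybound].
rewrite /trnorm_of -mulrA mulr_suml mulr_sumr; rewrite le_eqVlt; apply/orP; left; apply/eqP; apply: eq_bigr => k _.
rewrite !mulr_sumr; apply: eq_bigr => l _; ring.
Qed.
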